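(* Let $\mathbb{X}\subseteq\mathbb{P}^2$ be a $\Bbbk$-configuration of type $(1,2,\dots,s)$ with $s\ge2$, defined by subsets $\mathbb{X}_1,\dots,\mathbb{X}_s$ and lines $\mathbb{L}_1,\dots,\mathbb{L}_s$, with $\mathbb{X}_1=\{P\}$ and $\mathbb{X}_2=\{Q_1,Q_2\}$. If $\mathbb{L}$ is a line with $|\mathbb{L}\cap\mathbb{X}|=s$ and $\mathbb{L}\notin\{\mathbb{L}_1,\dots,\mathbb{L}_s\}$, then $\mathbb{L}$ is either the line through $P$ and $Q_1$ or the line through $P$ and $Q_2$.
   Context: $\Bbbk$ is an algebraically closed field. A $\Bbbk$-configuration of type $(d_1,\dots,d_s)$ is a finite set $\mathbb{X}\subseteq\mathbb{P}^2$ for which there exist integers $1\le d_1<\cdots<d_s$, subsets $\mathbb{X}_1,\dots,\mathbb{X}_s$ of $\mathbb{X}$ and distinct lines $\mathbb{L}_1,\dots,\mathbb{L}_s\subseteq\mathbb{P}^2$ such that (1) $\mathbb{X}=\bigcup_{i=1}^s\mathbb{X}_i$; (2) $|\mathbb{X}_i|=d_i$ and $\mathbb{X}_i\subseteq\mathbb{L}_i$ for each $i$; (3) for $1<i\le s$, $\mathbb{L}_i$ contains no point of $\mathbb{X}_j$ for any $j<i$. We say $\mathbb{X}$ is defined by these subsets and lines. *)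

(* Defs.v *)
From HB Require Import structures.
From mathcomp Require Import all_boot all_order all_algebra all_field.
Set Implicit Arguments. Unset Strict Implicit. Unset Printing Implicit Defensive.
Import GRing.Theory.
Local Open Scope ring_scope.

(* Homogeneous coordinates in k^3.  A point of P^2 (resp. a line of P^2,
   via its coefficient vector) is represented by its unique NORMALIZED
   representative: a nonzero vector whose first nonzero coordinate is 1.
   Thus Leibniz equality of normalized vectors = equality in P^2. *)
Definition normalized (k : fieldType) (v : 'rV[k]_3) : bool :=
  if v 0 0 != 0 then v 0 0 == 1
  else if v 0 1 != 0 then v 0 1 == 1
  else v 0 2 == 1.

Definition on_line (k : fieldType) (L p : 'rV[k]_3) : bool :=
  \sum_(i < 3) L 0 i * p 0 i == 0.

Definition line_through (k : fieldType) (p q L : 'rV[k]_3) : bool :=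
  on_line L p && on_line L q.

(* X (a duplicate-free list of normalized points) is a k-configuration of
   type (d 1, ..., d s) defined by subsets Xs 1, ..., Xs s and distinct
   lines Ls 1, ..., Ls s (indices 1..s as in the paper). *)
Definition is_kconfig (k : fieldType) (s : nat) (d : nat -> nat)
    (Xs : nat -> seq 'rV[k]_3) (Ls : nat -> 'rV[k]_3) (X : seq 'rV[k]_3) : Prop :=
  [/\ (1 <= s)%N /\ uniq X /\ all (@normalized k) X,
      (forall x, x \in X <-> exists2 i, (1 <= i <= s)%N & x \in Xs i),
      (forall i, (1 <= i <= s)%N ->
         [/\ normalized (Ls i), uniq (Xs i), size (Xs i) = d i
           & all (on_line (Ls i)) (Xs i)]),
      (1 <= d 1)%N /\ (forall i, (1 <= i < s)%N -> (d i < d i.+1)%N)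
    & (forall i j, (1 <= i < j)%N -> (j <= s)%N -> Ls i != Ls j) /\
      (forall i j, (1 <= j < i)%N -> (i <= s)%N ->
         forall x, x \in Xs j -> ~~ on_line (Ls i) x)].

(* Main.v *)
Require Import Defs.
From HB Require Import structures.
From mathcomp Require Import all_boot all_order all_algebra all_field.
From mathcomp Require Import ring.
Import GRing.Theory.
Local Open Scope ring_scope.

Section S.
Variable k : fieldType.
Definition nrm (a b c : k) : bool :=
  if a != 0 then a == 1 else if b != 0 then b == 1 else c == 1.
Definition par (u0 u1 u2 v0 v1 v2 : k) : Prop :=
  [/\ u0 * v1 = u1 * v0, u0 * v2 = u2 * v0 & u1 * v2 = u2 * v1].

Lemma norm_par u0 u1 u2 v0 v1 v2 : nrm u0 u1 u2 -> nrm v0 v1 v2 ->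
  par u0 u1 u2 v0 v1 v2 -> [/\ u0 = v0, u1 = v1 & u2 = v2].
Proof.
rewrite /nrm /par.
have [->|h0] := eqVneq u0 0 => /=.
  have [->|h1] := eqVneq u1 0 => /=.
    move/eqP=> -> nv; rewrite !mul0r !mul1r => -[_ e0 e1]; subst v0 v1.
    by move: nv; rewrite eqxx /= => /eqP ->.
  move/eqP=> e1; subst u1; rewrite !mul0r => nv [+ _ e].
  rewrite mul1r => e0; subst v0; move: nv; rewrite eqxx /=.
  have [ev1|h1p] := eqVneq v1 0 => /=; first subst v1.
    by move=> /eqP ev2; move: e; rewrite ev2 mulr0 mul1r => /eqP; rewrite oner_eq0.
  by move/eqP=> e1; subst v1; rewrite mulr1 mul1r in e.
move/eqP=> e0; subst u0; rewrite !mul1r => nv [e1 e2 e3].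
have [e0|h0'] := eqVneq v0 0.
  subst v0; rewrite !mulr0 in e1 e2; subst v1 v2; move: nv.
  by rewrite eqxx /= eq_sym oner_eq0.
by move: nv; rewrite h0' /= => /eqP e; subst v0; rewrite !mulr1 in e1 e2.
Qed.

Lemma par_trans u0 u1 u2 v0 v1 v2 w0 w1 w2 :
  par u0 u1 u2 w0 w1 w2 -> par v0 v1 v2 w0 w1 w2 ->
  [|| w0 != 0, w1 != 0 | w2 != 0] -> par u0 u1 u2 v0 v1 v2.
Proof.
move=> [a1 a2 a3] [b1 b2 b3] /or3P[] h.
- have eu1 : u1 = u0 * w1 / w0 by rewrite a1 mulfK.
  have eu2 : u2 = u0 * w2 / w0 by rewrite a2 mulfK.
  have ev1 : v1 = v0 * w1 / w0 by rewrite b1 mulfK.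
  have ev2 : v2 = v0 * w2 / w0 by rewrite b2 mulfK.
  subst; split; field; exact: h.
- have eu0 : u0 = u1 * w0 / w1 by rewrite -a1 mulfK.
  have eu2 : u2 = u1 * w2 / w1 by rewrite a3 mulfK.
  have ev0 : v0 = v1 * w0 / w1 by rewrite -b1 mulfK.
  have ev2 : v2 = v1 * w2 / w1 by rewrite b3 mulfK.
  subst; split; field; exact: h.
- have eu0 : u0 = u2 * w0 / w2 by rewrite -a2 mulfK.
  have eu1 : u1 = u2 * w1 / w2 by rewrite -a3 mulfK.
  have ev0 : v0 = v2 * w0 / w2 by rewrite -b2 mulfK.
  have ev1 : v1 = v2 * w1 / w2 by rewrite -b3 mulfK.
  subst; split; field; exact: h.
Qed.

Lemma kern {l0 l1 l2 x0 x1 x2 y0 y1 y2} :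
  l0 * x0 + l1 * x1 + l2 * x2 = 0 -> l0 * y0 + l1 * y1 + l2 * y2 = 0 ->
  par l0 l1 l2 (x1 * y2 - x2 * y1) (x2 * y0 - x0 * y2) (x0 * y1 - x1 * y0).
Proof.
move=> Hx Hy; split; apply/eqP; rewrite -subr_eq0; apply/eqP.
- transitivity (x2 * (l0 * y0 + l1 * y1 + l2 * y2) - y2 * (l0 * x0 + l1 * x1 + l2 * x2)); first ring.
  by rewrite Hx Hy; ring.
- transitivity (y1 * (l0 * x0 + l1 * x1 + l2 * x2) - x1 * (l0 * y0 + l1 * y1 + l2 * y2)); first ring.
  by rewrite Hx Hy; ring.
- transitivity (x0 * (l0 * y0 + l1 * y1 + l2 * y2) - y0 * (l0 * x0 + l1 * x1 + l2 * x2)); first ring.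
  by rewrite Hx Hy; ring.
Qed.

Lemma key l0 l1 l2 m0 m1 m2 x0 x1 x2 y0 y1 y2 :
  nrm l0 l1 l2 -> nrm m0 m1 m2 -> nrm x0 x1 x2 -> nrm y0 y1 y2 ->
  l0 * x0 + l1 * x1 + l2 * x2 = 0 -> l0 * y0 + l1 * y1 + l2 * y2 = 0 ->
  m0 * x0 + m1 * x1 + m2 * x2 = 0 -> m0 * y0 + m1 * y1 + m2 * y2 = 0 ->
  [/\ l0 = m0, l1 = m1 & l2 = m2] \/ [/\ x0 = y0, x1 = y1 & x2 = y2].
Proof.
move=> nl nm nx ny lx ly mx my.
have [/and3P[/eqP c0 /eqP c1 /eqP c2]|] :=
  boolP [&& x1 * y2 - x2 * y1 == 0, x2 * y0 - x0 * y2 == 0 & x0 * y1 - x1 * y0 == 0].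
  right; apply: norm_par => //; split; apply/eqP; rewrite -subr_eq0; apply/eqP.
  - by rewrite c2.
  - by apply/eqP; rewrite -oppr_eq0 opprB c1.
  - by rewrite c0.
rewrite !negb_and => hc; left; apply: norm_par => //.
apply: par_trans; [exact: kern lx ly | exact: kern mx my | exact: hc].
Qed.
End S.

Lemma on_lineE (k : fieldType) (L p : 'rV[k]_3) :
  on_line L p = (L 0 0 * p 0 0 + L 0 1 * p 0 1 + L 0 2 * p 0 2 == 0).
Proof.
rewrite /on_line !big_ord_recl big_ord0 addr0 !addrA.
have e1 : lift ord0 (ord0 : 'I_2) = 1 :> 'I_3 by apply/val_inj.
have e2 : lift ord0 (lift ord0 (ord0 : 'I_1)) = 2 :> 'I_3 by apply/val_inj.
by rewrite e1 e2.
Qed.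

Lemma rv3P (k : fieldType) (u v : 'rV[k]_3) :
  [/\ u 0 0 = v 0 0, u 0 1 = v 0 1 & u 0 2 = v 0 2] -> u = v.
Proof.
case=> e0 e1 e2; apply/rowP => -[i Hi]; case: i Hi => [|[|[|//]]] Hi.
- by have -> : Ordinal Hi = 0 by apply/val_inj.
- by have -> : Ordinal Hi = 1 by apply/val_inj.
- by have -> : Ordinal Hi = 2 by apply/val_inj.
Qed.

Lemma lines_meet (k : fieldType) (L M x y : 'rV[k]_3) :
  normalized L -> normalized M -> normalized x -> normalized y ->
  on_line L x -> on_line L y -> on_line M x -> on_line M y -> L = M \/ x = y.
Proof.
rewrite !on_lineE => nL nM nx ny /eqP a /eqP b /eqP c /eqP d.
case: (@key k _ _ _ _ _ _ _ _ _ _ _ _ nL nM nx ny a b c d) => h; [left|right]; exact: rv3P.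
Qed.

From mathcomp Require Import zify.

Lemma count_le1 (k:fieldType) (L M : 'rV[k]_3) (S : seq 'rV[k]_3) :
  normalized L -> normalized M -> L != M -> uniq S -> all (@normalized k) S ->
  all (on_line M) S -> (count (on_line L) S <= 1)%N.
Proof.
move=> nL nM LM uS nS oS; rewrite -size_filter.
have uF : uniq (filter (on_line L) S) by exact: filter_uniq.
have hx : forall x, x \in filter (on_line L) S -> (on_line L x && (x \in S)).
  by move=> x; rewrite mem_filter.
case E: (filter _ S) uF hx => [|x [|y r]] //= /andP[xr _] hx.
have /andP[Lx xS] := hx x (mem_head _ _).
have /andP[Ly yS] : on_line L y && (y \in S) by apply: hx; rewrite !inE eqxx orbT.
move: xr; rewrite inE negb_or => /andP[xy _].
case: (@lines_meet k L M x y nL nM (allP nS _ xS) (allP nS _ yS) Lx Ly (allP oS _ xS) (allP oS _ yS)) => e.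
- by rewrite e eqxx in LM.
- by rewrite e eqxx in xy.
Qed.

Lemma sumn_le (f : nat -> nat) m n :
  (forall i, (m <= i < m + n)%N -> (f i <= 1)%N) -> (sumn (map f (iota m n)) <= n)%N.
Proof.
elim: n m => [|n IH] m h //=.
have h1 : (f m <= 1)%N by apply: h; lia.
have h2 := IH m.+1 (fun i hi => h i ltac:(lia)); lia.
Qed.

Lemma sumn_lt (f : nat -> nat) m n j :
  (forall i, (m <= i < m + n)%N -> (f i <= 1)%N) -> (m <= j < m + n)%N -> f j = 0%N ->
  (sumn (map f (iota m n)) < n)%N.
Proof.
elim: n m => [|n IH] m h hj fj /=; first lia.
have h1 : (f m <= 1)%N by apply: h; lia.
have [ejm|nejm] := eqVneq j m.
  subst j; have := @sumn_le f m.+1 n (fun i hi => h i ltac:(lia)); lia.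
have := IH m.+1 (fun i hi => h i ltac:(lia)) ltac:(lia) fj; lia.
Qed.

Theorem lemma2p7 (k : closedFieldType) (s : nat)
    (Xs : nat -> seq 'rV[k]_3) (Ls : nat -> 'rV[k]_3) (X : seq 'rV[k]_3)
    (P Q1 Q2 L : 'rV[k]_3) :
  (2 <= s)%N ->
  is_kconfig s (fun i => i) Xs Ls X ->
  Xs 1%N = [:: P] ->
  Xs 2%N =i [:: Q1; Q2] ->
  normalized L ->
  count (on_line L) X = s ->
  (forall i, (1 <= i <= s)%N -> L != Ls i) ->
  line_through P Q1 L || line_through P Q2 L.
Proof.
move=> s2 [[_ [uX nX]] memX hXs [d1 dinc] [dLs disj]] X1 X2 nL cnt LLs.
set F := flatten (map Xs (iota 1 s)).
have sub : {subset X <= F}.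
  move=> x /memX [i hi xi]; apply/flattenP; exists (Xs i) => //.
  by apply/map_f; rewrite mem_iota; lia.
have cF : (count (on_line L) X <= count (on_line L) F)%N.
  rewrite -!size_filter; apply: uniq_leq_size; first exact: filter_uniq.
  by move=> x; rewrite !mem_filter => /andP[-> /sub].
have nXs : forall i, (1 <= i <= s)%N -> all (@normalized k) (Xs i).
  by move=> i hi; apply/allP => x xi; apply: (allP nX); apply/memX; exists i.
pose f := fun i => count (on_line L) (Xs i).
have le1 : forall i, (1 <= i < 1 + s)%N -> (f i <= 1)%N.
  move=> i hi; have hi' : (1 <= i <= s)%N by lia.
  case: (hXs i hi') => nLi uXi _ oXi.
  exact: (@count_le1 k L (Ls i) (Xs i) nL) nLi (LLs i hi') uXi (nXs i hi') oXi.
have cF' : count (on_line L) F = sumn (map f (iota 1 s)).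
  by rewrite /F count_flatten -map_comp.
have pos : forall j, (1 <= j < 1 + s)%N -> (0 < f j)%N.
  move=> j hj; rewrite lt0n; apply/negP => /eqP h0.
  have := @sumn_lt f 1 s j le1 hj h0; lia.
have := pos 1%N ltac:(lia); rewrite /f X1 /= addn0 lt0b => LP.
have := pos 2%N ltac:(lia); rewrite /f -has_count => /hasP [q qX2 Lq].
move: qX2; rewrite X2 !inE => /orP[] /eqP eq; subst q;
  by rewrite /line_through LP Lq ?orbT.
Qed.
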